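(* Fix non-negative integers $r$ and $m\ge1$. Let $b_j=(1^j,2^j,\dots,m^j)^T\in\mathbb{R}^m$ for $j=0,\dots,r$, and let $\tilde b_0=b_0$ and $\tilde b_j=b_j-\Pi_{j-1}b_j$ for $j\ge1$, where $\Pi_{j-1}$ is the orthogonal projection onto $\mathrm{Span}(b_0,\dots,b_{j-1})$ (Gram–Schmidt orthogonalization without normalization). Then for each $j\in\{0,\dots,r\}$ there is a constant $c_r>0$ depending only on $r$ such that $$\|\tilde b_j\|_\infty\le c_r\,m^j.$$ *)

(* Defs.v *)
From HB Require Import structures.
From mathcomp Require Import all_boot all_order all_algebra.
From mathcomp Require Import reals.
Set Implicit Arguments. Unset Strict Implicit. Unset Printing Implicit Defensive.
Import Order.TTheory GRing.Theory Num.Theory.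
Local Open Scope ring_scope.

Definition bvec (R : realType) (m j : nat) : 'rV[R]_m :=
  \row_(k < m) ((k.+1)%:R ^+ j).

(* matrix whose rows are b_0, ..., b_{j-1}; its row space is Span(b_0..b_{j-1}) *)
Definition bspan (R : realType) (m j : nat) : 'M[R]_(j, m) :=
  \matrix_(i < j) bvec R m i.

Definition is_orth_proj (R : realType) (n m : nat) (U : 'M[R]_(n, m))
  (v p : 'rV[R]_m) : Prop :=
  (p <= U)%MS /\ (v - p) *m U^T = 0.

Definition supnorm (R : realType) (m : nat) (x : 'rV[R]_m) : R :=
  \big[Num.max/0]_(k < m) `|x 0 k|.

(* Main.v *)
Require Import Defs.
From HB Require Import structures.
From mathcomp Require Import all_boot all_order all_algebra.
From mathcomp Require Import reals.
From mathcomp Require Import ring lra zify.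
Import Order.TTheory GRing.Theory Num.Theory.
Local Open Scope ring_scope.

Section FD.
Variable R : realType.

Lemma pascal_step n (f : nat -> R) :
  \sum_(l < n.+2) (-1) ^+ l * 'C(n.+1, l)%:R * f l =
  \sum_(l < n.+1) (-1) ^+ l * 'C(n, l)%:R * (f l - f l.+1).
Proof.
rewrite big_ord_recl /=.
under eq_bigr => i _ do rewrite /bump /= binS natrD exprS.
rewrite (eq_bigr (fun i : 'I_n.+1 => (-1) ^+ i * 'C(n, i.+1)%:R * f i.+1 * (-1)
    + (- ((-1) ^+ i * 'C(n, i)%:R * f i.+1)))); last first.
  by move=> i _; rewrite /=; ring.
rewrite big_split /=.
under [in RHS]eq_bigr => i _ do rewrite mulrBr.
rewrite big_split /= sumrN addrA; congr (_ + _).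
rewrite [in RHS]big_ord_recl /= !bin0 !expr0 !mul1r.
congr (_ + _).
rewrite big_ord_recr /= bin_small // mulr0 !mul0r addr0.
by apply: eq_bigr => i _; rewrite /bump /= exprS; ring.
Qed.

Lemma alt_pow n i : (i < n)%N ->
  \sum_(l < n.+1) (-1) ^+ l * 'C(n, l)%:R * (l%:R : R) ^+ i = 0.
Proof.
elim: n i => [//|n IH] i Hi.
rewrite (pascal_step n (fun l => (l%:R : R) ^+ i)) /=.
have E (l : nat) : (l%:R : R)^+i - (l.+1)%:R^+i = - \sum_(a < i) (l%:R)^+a *+ 'C(i,a).
  rewrite -addn1 natrD exprD1n big_ord_recr /= binn mulr1n; ring.
under eq_bigr => l _ do rewrite E mulrN.
rewrite sumrN.
rewrite (eq_bigr (fun l : 'I_n.+1 => \sum_(a < i) (-1) ^+ l * 'C(n, l)%:R * (l%:R ^+ a *+ 'C(i, a)))); last first.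
  by move=> l _; rewrite mulr_sumr.
rewrite exchange_big /= big1 ?oppr0 // => a _.
under eq_bigr => l _ do rewrite mulrnAr -mulr_natr.
rewrite -mulr_suml IH ?mul0r //.
have := ltn_ord a; lia.
Qed.

Lemma fd_mono n i (x d : R) : (i < n)%N ->
  \sum_(l < n.+1) (-1) ^+ l * 'C(n, l)%:R * (x + l%:R * d) ^+ i = 0.
Proof.
move=> Hi.
under eq_bigr => l _ do rewrite exprDn mulr_sumr.
rewrite exchange_big /= big1 // => b _.
rewrite (eq_bigr (fun l : 'I_n.+1 => (-1) ^+ l * 'C(n, l)%:R * (l%:R : R) ^+ b *
   (x ^+ (i - b) * d ^+ b * 'C(i, b)%:R))); last first.
  by move=> l _; rewrite exprMn -mulr_natr; ring.
rewrite -mulr_suml alt_pow ?mul0r //.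
have := ltn_ord b; lia.
Qed.

Lemma sum_inj_le (F : nat -> R) (g : nat -> nat) H m :
  (forall t, 0 <= F t) -> (forall h, (h < H)%N -> (g h < m)%N) ->
  (forall h1 h2, (h1 < H)%N -> (h2 < H)%N -> g h1 = g h2 -> h1 = h2) ->
  \sum_(h < H) F (g h) <= \sum_(t < m) F t.
Proof.
move=> F0 gm gi.
rewrite -(big_mkord xpredT (fun h => F (g h))) -(big_mkord xpredT F).
rewrite -(big_map g xpredT F).
set s := map g _.
have H0 : 0 <= \sum_(t <- index_iota 0 m | t \notin s) F t by apply: sumr_ge0.
rewrite [X in _ <= X](bigID (fun t => t \in s)) /= -[X in _ <= X + _]big_filter.
suff E : \sum_(t <- [seq t <- index_iota 0 m | t \in s]) F t = \sum_(t <- s) F t by rewrite E; lra.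
  apply: perm_big; apply: uniq_perm.
  - by rewrite filter_uniq // iota_uniq.
  - rewrite map_inj_in_uniq ?iota_uniq // => a b.
    rewrite !mem_index_iota => /andP[_ Ha] /andP[_ Hb]; exact: gi.
  move=> t; rewrite mem_filter; apply/andP/idP => [[]//|Ht]; split=> //.
  move: Ht => /mapP[h]; rewrite mem_index_iota => /andP[_ Hh] ->.
  by rewrite mem_index_iota /= gm.
Qed.

Lemma sumr_constR (x : R) m : \sum_(t < m) x = m%:R * x.
Proof. by rewrite sumr_const card_ord mulr_natl. Qed.

Lemma sum_bin_le n : (\sum_(l < n) 'C(n, l.+1) <= 2 ^ n)%N.
Proof.
have E : (2 ^ n = \sum_(i < n.+1) 'C(n, i))%N.
  by rewrite -[in LHS](addn1 1) expnDn; apply: eq_bigr => i _; rewrite !exp1n !muln1.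
rewrite E big_ord_recl /=.
under [X in (_ <= _ + X)%N]eq_bigr do rewrite /bump /= add1n.
by rewrite leq_addl.
Qed.

Lemma core m j (Q : R -> R) (S : R) k :
  (forall x d, \sum_(l < j.+2) (-1) ^+ l * 'C(j.+1, l)%:R * Q (x + l%:R * d) = 0) ->
  \sum_(t < m) `|Q (t.+1)%:R| <= S -> (k < m)%N ->
  `|Q (k.+1)%:R| * (m %/ (2 * j.+1))%:R <= 2 ^+ j.+1 * S.
Proof.
move=> hQ hS hk.
set n := j.+1. set H := (m %/ (2 * n))%N. set a : R := (k.+1)%:R.
have HnH : (2 * (n * H) <= m)%N.
  have := leq_divM m (2 * n); rewrite -/H; lia.
set fwd := (k + n * H < m)%N.
pose g l h := if fwd then (k + l * h)%N else (k - l * h)%N.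
pose s : R := if fwd then 1 else -1.
have Hgval l h : (l <= n)%N -> (h <= H)%N ->
    ((g l h).+1%:R : R) = a + l%:R * (s * h%:R).
  move=> hl hh; have := leq_mul hl hh; rewrite /g /s /a; case: ifP => Hf Hlh.
  - by rewrite mul1r -natrM -natrD addSn.
  - have Hk : (l * h <= k)%N by move/negbT: Hf; rewrite -leqNgt; lia.
    rewrite mulN1r mulrN -natrM -subSn // natrB //; lia.
have Hgm l h : (l <= n)%N -> (h <= H)%N -> (g l h < m)%N.
  rewrite /g; case: ifP => Hf hl hh; have := leq_mul hl hh; lia.
have Hgi l h1 h2 : (0 < l)%N -> (h1 <= H)%N -> (h2 <= H)%N -> (l <= n)%N ->
    g l h1 = g l h2 -> h1 = h2.
  move=> l0 hh1 hh2 hl.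
  have := leq_mul hl hh1; have := leq_mul hl hh2.
  rewrite /g; case: ifP => Hf B1 B2 E.
  - have : (l * h1 = l * h2)%N by lia.
    by move/eqP; rewrite eqn_pmul2l // => /eqP.
  - have : (l * h1 = l * h2)%N.
      move/negbT: Hf; rewrite -leqNgt => Hf; lia.
    by move/eqP; rewrite eqn_pmul2l // => /eqP.
have HA h : (h < H)%N ->
    `|Q a| <= \sum_(l < n) 'C(n, l.+1)%:R * `|Q (g l.+1 h.+1).+1%:R|.
  move=> hh; have := hQ a (s * h.+1%:R).
  rewrite big_ord_recl /= expr0 bin0 mul1r mul0r addr0 => E.
  have -> : Q a = - \sum_(i < n) (-1) ^+ (bump 0 i) * 'C(n, bump 0 i)%:R *
     Q (a + (bump 0 i)%:R * (s * h.+1%:R)).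
    by rewrite mul1r in E; apply/eqP; rewrite -addr_eq0 E.
  rewrite normrN; apply: le_trans (ler_norm_sum _ _ _) _.
  apply: ler_sum => i _.
  rewrite /bump /= add1n Hgval; [|by have := ltn_ord i; lia|by []].
  by rewrite !normrM normrX normrN1 expr1n mul1r normr_nat.
have : \sum_(h < H) `|Q a| <=
    \sum_(h < H) \sum_(l < n) 'C(n, l.+1)%:R * `|Q (g l.+1 h.+1).+1%:R|.
  by apply: ler_sum => h _; apply: HA.
rewrite sumr_const card_ord exchange_big /= => HB.
rewrite mulr_natr.
apply: le_trans HB _.
have S0 : 0 <= S by apply: le_trans hS; apply: sumr_ge0.
apply: (@le_trans _ _ (\sum_(l < n) 'C(n, l.+1)%:R * S)).
  apply: ler_sum => l _; rewrite -mulr_sumr; apply: ler_wpM2l => //.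
  apply: le_trans hS.
  apply: (sum_inj_le (fun t => `|Q (t.+1)%:R|) (fun h => g l.+1 h.+1)).
  - by move=> t.
  - move=> h hh; apply: Hgm => //; have := ltn_ord l; lia.
  - move=> h1 h2 hh1 hh2 E; have := Hgi l.+1 h1.+1 h2.+1 erefl hh1 hh2.
    have := ltn_ord l; move=> hl /(_ hl E); by case.
rewrite -mulr_suml; apply: ler_wpM2r => //.
by rewrite -natr_sum -natrX ler_nat sum_bin_le.
Qed.
End FD.

Theorem lemma10 (R : realType) (r : nat) :
  exists c : R, 0 < c /\
    forall (m : nat), (0 < m)%N ->
    forall (j : nat), (j <= r)%N ->
    forall p : 'rV[R]_m, is_orth_proj (bspan R m j) (bvec R m j) p ->
      supnorm (bvec R m j - p) <= c * (m%:R) ^+ j.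
Proof.
exists ((2 * r.+1 + 2 ^ r.+1 * (4 * r.+1))%N)%:R; split; first by rewrite ltr0n; lia.
move=> m m0 j hj p [Hp Horth].
move/submxP: Hp => [D HD].
pose Q (x : R) := x ^+ j - \sum_(i < j) D 0 i * x ^+ i.
pose M : R := m%:R ^+ j.
have M0 : 0 < M by rewrite exprn_gt0 // ltr0n.
have Hq t : (bvec R m j - p) 0 t = Q (t.+1)%:R.
  rewrite /Q !mxE HD mxE; congr (_ - _); apply: eq_bigr => i _.
  by rewrite /bspan !mxE.
have hQ x d : \sum_(l < j.+2) (-1) ^+ l * 'C(j.+1, l)%:R * Q (x + l%:R * d) = 0.
  rewrite /Q; under eq_bigr do rewrite mulrBr mulr_sumr.
  rewrite sumrB fd_mono // exchange_big /= big1 ?subrr // => i _.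
  under eq_bigr do rewrite mulrCA.
  by rewrite -mulr_sumr fd_mono ?mulr0 //; have := ltn_ord i; lia.
have Horth' : \sum_(t < m) Q (t.+1)%:R * p 0 t = 0.
  have : (bvec R m j - p) *m p^T = 0 by rewrite [in X in _ *m X]HD trmx_mul mulmxA Horth mul0mx.
  move/matrixP => /(_ 0 0); rewrite !mxE => E; rewrite -[in RHS]E.
  by apply: eq_bigr => t _; rewrite Hq mxE.
have Hsq : \sum_(t < m) Q (t.+1)%:R ^+ 2 <= m%:R * M ^+ 2.
  apply: (@le_trans _ _ (\sum_(t < m) (bvec R m j 0 t) ^+ 2)).
    apply: (@le_trans _ _ (\sum_(t < m) (Q (t.+1)%:R ^+ 2 + 2 * (Q (t.+1)%:R * p 0 t)))).
      by rewrite big_split /= -mulr_sumr Horth' mulr0 addr0.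
    apply: ler_sum => t _.
    have -> : bvec R m j 0 t = Q (t.+1)%:R + p 0 t by rewrite -Hq !mxE subrK.
    set u := Q _; set v := p 0 t; nra.
  rewrite -(@sumr_constR R (M ^+ 2) m); apply: ler_sum => t _.
  rewrite mxE /M -exprM -exprM lerXn2r ?nnegrE ?ler0n // ler_nat; exact: ltn_ord.
have HS : \sum_(t < m) `|Q (t.+1)%:R| <= m%:R * M.
  suff : 2 * M * \sum_(t < m) `|Q (t.+1)%:R| <= 2 * M * (m%:R * M).
    by rewrite ler_pM2l // mulr_gt0.
  apply: (@le_trans _ _ (\sum_(t < m) Q (t.+1)%:R ^+ 2 + m%:R * M ^+ 2)); last by lra.
  rewrite mulr_sumr -(@sumr_constR R (M ^+ 2) m).
  rewrite -big_split /=; apply: ler_sum => t _.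
  set u := Q _; have := sqr_ge0 (`|u| - M); have e : `|u| ^+ 2 = u ^+ 2 by rewrite -normrX ger0_norm ?sqr_ge0.
  nra.
rewrite /supnorm; apply: bigmax_le.
  by apply: mulr_ge0 => //; apply: ltW.
move=> k _; rewrite Hq -/M.
set n := j.+1.
have Hc1 : (2 * n <= 2 * r.+1 + 2 ^ r.+1 * (4 * r.+1))%N by lia.
have Hc2 : (2 ^ n * (4 * n) <= 2 * r.+1 + 2 ^ r.+1 * (4 * r.+1))%N.
  have := @leq_pexp2l 2 n r.+1 isT hj; have : (n <= r.+1)%N by lia.
  move=> a b; apply: leq_trans (leq_addl _ _); apply: leq_mul; [exact: b | lia].
have Hk1 : `|Q (k.+1)%:R| <= m%:R * M.
  apply: le_trans HS.
  have := @sum_inj_le R (fun t => `|Q (t.+1)%:R|) (fun _ => nat_of_ord k) 1 m.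
  by rewrite big_ord1; apply => // [h1 h2]; lia.
have Hk2 := @core R m j Q _ k hQ HS (ltn_ord k).
set H := (m %/ (2 * n))%N in Hk2.
have Hceil := @ltn_ceil m (2 * n) isT; rewrite -/H in Hceil.
case: (posnP H) => H0.
- apply: le_trans Hk1 _; apply: ler_wpM2r; first exact: ltW.
  rewrite ler_nat; rewrite H0 in Hceil; lia.
- have Hm : (m <= 4 * n * H)%N by nia.
  have : `|Q (k.+1)%:R| * H%:R <= (2 ^ n * (4 * n))%:R * M * H%:R.
    apply: le_trans Hk2 _; rewrite natrM natrX -!mulrA ler_wpM2l ?exprn_ge0 ?ler0n //.
    rewrite mulrCA [X in X <= _]mulrC; apply: ler_wpM2l; first exact: ltW.
    by rewrite -natrM ler_nat.
  rewrite ler_pM2r ?ltr0n // => Hk3.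
  apply: le_trans Hk3 _; apply: ler_wpM2r; first exact: ltW.
  by rewrite ler_nat.
Qed.
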